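(* Let $Q_\bullet=(Q_k)_{k\ge0}$ be a weakly increasing Markov chain on $\{1,2,\dots\}$ (i.e. transition matrix $(p_{i,j})$ with $p_{i,j}=0$ for $j<i$), with initial distribution $p_{0,j}:=P(Q_0=j)$ such that $p_{0,j}>0$ for infinitely many $j$. Let $G_j:=\sum_{k\ge0}\mathbf 1(Q_k=j)$ and suppose $P(G_j<\infty)=1$ and $P(G_j=0)<1$ for every $j$, and that $G_1,G_2,\dots$ are independent. Then $$h_j:=P(G_j\ge1)=\frac{p_{0,j}}{p_{0,j}+p_{0,j+1}+\cdots},\qquad \prod_{j\ge1}(1-h_j)=0,$$ and the transition matrix has the form $$p_{i,j}=\mathbf 1(j=i)p_{i,i}+\mathbf 1(j>i)(1-p_{i,i})\,h_j\prod_{k=i+1}^{j-1}(1-h_k)=\mathbf 1(j=i)p_{i,i}+\mathbf 1(j>i)(1-p_{i,i})\frac{p_{0,j}}{p_{0,i+1}+p_{0,i+2}+\cdots}$$ for some self-transition probabilities $p_{i,i}<1$. Moreover (still assuming independence of the $G_j$) the following are equivalent: (a) $p_{i,i}=h_i$ for all $i$; (b) each $G_j$ is geometrically distributed on $\{0,1,2,\dots\}$; (c) $Q_\bullet$ is the weak record chain derived from $(p_{0,j})$. Also the following are equivalent: (a') $p_{i,i}=0$ for all $i$; (b') each $G_j$ has a Bernoulli distribution on $\{0,1\}$; (c') $Q_\bullet$ is the strict record chain derived from $(p_{0,j})$. In all cases, the chain $Q_\bullet$ observed only at its changes of state is a copy of the strict record chain derived from $(p_{0,j})$.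
   Context: Given a probability distribution $(p_{0,j})_{j\ge1}$ on positive integers, the weak record chain is the sequence of weak upper record values of an i.i.d. sequence with law $(p_{0,j})$; it is Markov with initial law $(p_{0,j})$ and transition matrix $p^{\le}_{i,j}=p_{0,j}\mathbf 1(i\le j)/(p_{0,i}+p_{0,i+1}+\cdots)$. The strict record chain is the sequence of strict upper record values; it is Markov with initial law $(p_{0,j})$ and transition matrix $p^{<}_{i,j}=p_{0,j}\mathbf 1(i<j)/(p_{0,i+1}+p_{0,i+2}+\cdots)$. *)

(* Defs.v *)
From Stdlib Require Export Reals List.
Open Scope R_scope.

Record is_prob (Om : Type) (F : (Om -> Prop) -> Prop) (P : (Om -> Prop) -> R) : Prop := {
  ps_full : F (fun _ => True);
  ps_compl : forall A, F A -> F (fun w => ~ A w);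
  ps_union : forall A : nat -> Om -> Prop, (forall n, F (A n)) -> F (fun w => exists n, A n w);
  ps_nonneg : forall A, F A -> 0 <= P A;
  ps_total : P (fun _ => True) = 1;
  ps_sigma_add : forall A : nat -> Om -> Prop,
      (forall n, F (A n)) ->
      (forall m n w, m <> n -> A m w -> A n w -> False) ->
      infinite_sum (fun n => P (A n)) (P (fun w => exists n, A n w))
}.

Fixpoint prod_upto (f : nat -> R) (n : nat) : R :=
  match n with O => 1 | S m => prod_upto f m * f m end.

Definition path_prob (p0 : nat -> R) (p : nat -> nat -> R) (x : nat -> nat) (n : nat) : R :=
  p0 (x O) * prod_upto (fun k => p (x k) (x (S k))) n.

(** States are the positive integers 1,2,...; [p0 0 = 0] and row 0 of [p] is irrelevant. *)
Definition is_distribution (p0 : nat -> R) : Prop :=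
  p0 O = 0 /\ (forall j, 0 <= p0 j) /\ infinite_sum p0 1.

Definition is_transition (p : nat -> nat -> R) : Prop :=
  forall i, (1 <= i)%nat -> p i O = 0 /\ (forall j, 0 <= p i j) /\ infinite_sum (p i) 1.

Definition weakly_increasing_kernel (p : nat -> nat -> R) : Prop :=
  forall i j, (j < i)%nat -> p i j = 0.

Definition is_markov {Om : Type} (F : (Om -> Prop) -> Prop) (P : (Om -> Prop) -> R)
  (Q : nat -> Om -> nat) (p0 : nat -> R) (p : nat -> nat -> R) : Prop :=
  (forall k j, F (fun w => Q k w = j)) /\
  forall (n : nat) (x : nat -> nat),
    P (fun w => forall k, (k <= n)%nat -> Q k w = x k) = path_prob p0 p x n.

Definition G_eq {Om : Type} (Q : nat -> Om -> nat) (j n : nat) (w : Om) : Prop :=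
  exists l : list nat, NoDup l /\ length l = n /\ forall k, Q k w = j <-> In k l.

Definition G_ge1 {Om : Type} (Q : nat -> Om -> nat) (j : nat) (w : Om) : Prop :=
  exists k, Q k w = j.

Definition G_finite {Om : Type} (Q : nat -> Om -> nat) (j : nat) (w : Om) : Prop :=
  exists n, G_eq Q j n w.

Definition G_independent {Om : Type} (P : (Om -> Prop) -> R) (Q : nat -> Om -> nat) : Prop :=
  forall (S : list nat) (v : nat -> nat),
    NoDup S -> (forall j, In j S -> (1 <= j)%nat) ->
    P (fun w => forall j, In j S -> G_eq Q j (v j) w)
    = fold_right (fun j acc => P (G_eq Q j (v j)) * acc) 1 S.

Definition tail_sum (p0 : nat -> R) (i : nat) (T : R) : Prop :=
  infinite_sum (fun n => p0 (i + n)%nat) T.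

Definition is_weak_record_kernel (p0 : nat -> R) (p : nat -> nat -> R) : Prop :=
  forall i j, (1 <= i)%nat -> (1 <= j)%nat -> forall T, tail_sum p0 i T ->
    p i j = if Nat.leb i j then p0 j / T else 0.

Definition is_strict_record_kernel (p0 : nat -> R) (p : nat -> nat -> R) : Prop :=
  forall i j, (1 <= i)%nat -> (1 <= j)%nat -> forall T, tail_sum p0 (S i) T ->
    p i j = if Nat.ltb i j then p0 j / T else 0.

(** The event: the first n+1 successive distinct states visited by Q
    (i.e. Q observed at its changes of state) are x 0, x 1, ..., x n. *)
Definition jump_prefix {Om : Type} (Q : nat -> Om -> nat) (n : nat) (x : nat -> nat) (w : Om) : Prop :=
  exists t : nat -> nat,
    t O = O /\
    (forall k, (k < n)%nat ->
        (t k < t (S k))%nat /\ x k <> x (S k) /\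
        (forall s, (t k <= s < t (S k))%nat -> Q s w = x k)) /\
    Q (t n) w = x n.

(* Main.v *)
Require Import Defs.
From Stdlib Require Import Reals List.
From Stdlib Require Import Lia Lra Permutation Classical FunctionalExtensionality PropExtensionality.
Open Scope R_scope.

Lemma ev_ext {Om : Type} (A B : Om -> Prop) : (forall w, A w <-> B w) -> A = B.
Proof. intro H. apply functional_extensionality; intro w. apply propositional_extensionality; auto. Qed.

Lemma sum_const c n : sum_f_R0 (fun _ => c) n = INR (S n) * c.
Proof. induction n; simpl sum_f_R0. simpl; ring. rewrite IHn. rewrite (S_INR (S n)). ring. Qed.

Lemma isum_eventually (f : nat -> R) (l : R) N :
  (forall n, (n >= N)%nat -> sum_f_R0 f n = l) -> infinite_sum f l.
Proof.
  intros H eps He. exists N. intros n Hn. rewrite H by lia. unfold Rdist. rewrite Rminus_diag, Rabs_R0. lra.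
Qed.

Lemma isum_scal (f : nat -> R) l K : infinite_sum f l -> infinite_sum (fun n => f n * K) (l * K).
Proof.
  intros H. destruct (Req_dec K 0) as [HK|HK].
  - subst. apply isum_eventually with 0%nat. intros n _. rewrite <- scal_sum. ring.
  - intros eps He. destruct (H (eps / Rabs K)) as [N HN].
    { apply Rdiv_lt_0_compat; auto. apply Rabs_pos_lt; auto. }
    exists N. intros n Hn. specialize (HN n Hn). rewrite <- scal_sum. unfold Rdist in *.
    replace (K * sum_f_R0 f n - l * K) with ((sum_f_R0 f n - l) * K) by ring.
    rewrite Rabs_mult. apply Rabs_pos_lt in HK.
    apply (Rmult_lt_compat_r (Rabs K)) in HN; auto.
    replace (eps / Rabs K * Rabs K) with eps in HN by (field; lra). lra.
Qed.

Lemma isum_ext (f g : nat -> R) l : (forall n, f n = g n) -> infinite_sum f l -> infinite_sum g l.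
Proof. intros H. replace g with f; auto. apply functional_extensionality; auto. Qed.

Lemma F_compl {Om} {F : (Om -> Prop) -> Prop} {P} (HP : is_prob Om F P) A : F A -> F (fun w => ~ A w).
Proof. exact (ps_compl _ _ _ HP A). Qed.
Lemma F_full {Om} {F : (Om -> Prop) -> Prop} {P} (HP : is_prob Om F P) : F (fun _ => True).
Proof. exact (ps_full _ _ _ HP). Qed.
Lemma F_ex {Om} {F : (Om -> Prop) -> Prop} {P} (HP : is_prob Om F P) (A : nat -> Om -> Prop) :
  (forall n, F (A n)) -> F (fun w => exists n, A n w).
Proof. exact (ps_union _ _ _ HP A). Qed.
Lemma P_nonneg {Om} {F : (Om -> Prop) -> Prop} {P} (HP : is_prob Om F P) A : F A -> 0 <= P A.
Proof. exact (ps_nonneg _ _ _ HP A). Qed.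

Lemma P_empty {Om} {F : (Om -> Prop) -> Prop} {P} (HP : is_prob Om F P) : P (fun _ => False) = 0.
Proof.
  assert (HF : F (fun _ : Om => False)).
  { replace (fun _ : Om => False) with (fun w : Om => ~ (fun _ => True) w).
    apply (F_compl HP). apply (F_full HP).
    apply ev_ext; intuition. }
  pose proof (ps_sigma_add _ _ _ HP (fun _ => fun _ => False) (fun _ => HF)) as H.
  simpl in H. replace (fun w : Om => exists _ : nat, False) with (fun _ : Om => False) in H
   by (apply ev_ext; intros; split; [tauto| intros [_ []]]).
  specialize (H (fun _ _ _ _ H _ => H)).
  pose proof (ps_nonneg _ _ _ HP _ HF) as H0.
  set (c := P (fun _ => False)) in *.
  destruct (Req_dec c 0) as [|Hc]; auto. exfalso.
  destruct (H (c/2)) as [N HN]; [lra|].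
  specialize (HN (S N) ltac:(lia)). rewrite sum_const in HN. unfold Rdist in HN.
  rewrite (S_INR (S N)), (S_INR N) in HN. pose proof (pos_INR N).
  rewrite Rabs_right in HN. nra. nra.
Qed.

Lemma F_empty {Om} {F : (Om -> Prop) -> Prop} {P} (HP : is_prob Om F P) : F (fun _ => False).
Proof.
  replace (fun _ : Om => False) with (fun w : Om => ~ (fun _ => True) w).
  apply (F_compl HP). apply (F_full HP). apply ev_ext; intuition.
Qed.

Lemma F_const {Om} {F : (Om -> Prop) -> Prop} {P} (HP : is_prob Om F P) (c : Prop) : F (fun _ => c).
Proof.
  destruct (classic c) as [H|H].
  - replace (fun _ : Om => c) with (fun _ : Om => True). apply (F_full HP). apply ev_ext; intuition.
  - replace (fun _ : Om => c) with (fun _ : Om => False). apply (F_empty HP). apply ev_ext; intuition.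
Qed.

Lemma F_ext {Om} {F : (Om -> Prop) -> Prop} (A B : Om -> Prop) : (forall w, A w <-> B w) -> F A -> F B.
Proof. intros H. rewrite (ev_ext A B H). auto. Qed.

Lemma F_or {Om} {F : (Om -> Prop) -> Prop} {P} (HP : is_prob Om F P) A B : F A -> F B -> F (fun w => A w \/ B w).
Proof.
  intros HA HB. apply (F_ext (fun w => exists n, (match n with O => A | _ => B end) w)).
  - intro w. split. intros [[|n] H]; auto. intros [H|H]. exists O; auto. exists 1%nat; auto.
  - apply (F_ex HP). intros [|n]; auto.
Qed.

Lemma F_all {Om} {F : (Om -> Prop) -> Prop} {P} (HP : is_prob Om F P) (A : nat -> Om -> Prop) :
  (forall n, F (A n)) -> F (fun w => forall n, A n w).
Proof.
  intros H. apply (F_ext (fun w => ~ (fun w => exists n, ~ A n w) w)).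
  - intro w. split. intros H1 n. apply NNPP. intro H2. apply H1. exists n; auto.
    intros H1 [n Hn]. auto.
  - apply (F_compl HP). apply (F_ex HP). intro n. apply (F_compl HP); auto.
Qed.

Lemma F_and {Om} {F : (Om -> Prop) -> Prop} {P} (HP : is_prob Om F P) A B : F A -> F B -> F (fun w => A w /\ B w).
Proof.
  intros HA HB. apply (F_ext (fun w => forall n, (match n with O => A | _ => B end) w)).
  - intro w. split. intros H; split; [apply (H O)|apply (H 1%nat)]. intros [H1 H2] [|n]; auto.
  - apply (F_all HP). intros [|n]; auto.
Qed.

Lemma F_impl {Om} {F : (Om -> Prop) -> Prop} {P} (HP : is_prob Om F P) (c : Prop) A : F A -> F (fun w => c -> A w).
Proof.
  intros HA. destruct (classic c) as [H|H].
  - apply (F_ext A); auto. intro w; intuition.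
  - apply (F_ext (fun _ => True)). intro w; intuition. apply (F_full HP).
Qed.

Lemma F_not {Om} {F : (Om -> Prop) -> Prop} {P} (HP : is_prob Om F P) A : F A -> F (fun w => ~ A w).
Proof. apply (F_compl HP). Qed.

Lemma P_add2 {Om} {F : (Om -> Prop) -> Prop} {P} (HP : is_prob Om F P) A B :
  F A -> F B -> (forall w, A w -> B w -> False) -> P (fun w => A w \/ B w) = P A + P B.
Proof.
  intros HA HB Hd.
  set (G := fun n : nat => match n with O => A | 1%nat => B | _ => fun _ => False end).
  assert (HG : forall n, F (G n)). { intros [|[|n]]; simpl; auto. apply (F_empty HP). }
  pose proof (ps_sigma_add _ _ _ HP G HG) as H.
  assert (H2 : infinite_sum (fun n => P (G n)) (P (fun w => exists n, G n w))).
  { apply H. intros [|[|m]] [|[|n]] w Hmn; simpl; intros; try tauto; eauto. }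
  replace (fun w => exists n, G n w) with (fun w => A w \/ B w) in H2.
  2:{ apply ev_ext. intro w; split. intros [H1|H1]. exists O; auto. exists 1%nat; auto.
      intros [[|[|n]] H1]; simpl in H1; tauto. }
  apply (uniqueness_sum _ _ _ H2). apply isum_eventually with 1%nat.
  intros n Hn. destruct n; [lia|]. induction n.
  - simpl. ring.
  - simpl sum_f_R0. simpl sum_f_R0 in IHn. rewrite IHn by lia. simpl. rewrite (P_empty HP). ring.
Qed.

Lemma P_split {Om} {F : (Om -> Prop) -> Prop} {P} (HP : is_prob Om F P) A B :
  F A -> F B -> P A = P (fun w => A w /\ B w) + P (fun w => A w /\ ~ B w).
Proof.
  intros HA HB. rewrite <- (P_add2 HP).
  - f_equal. apply ev_ext. intro w. destruct (classic (B w)); tauto.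
  - apply (F_and HP); auto.
  - apply (F_and HP); auto. apply (F_not HP); auto.
  - intros w [_ H1] [_ H2]; auto.
Qed.

Lemma P_total {Om} {F : (Om -> Prop) -> Prop} {P} (HP : is_prob Om F P) : P (fun _ => True) = 1.
Proof. exact (ps_total _ _ _ HP). Qed.

Lemma P_compl {Om} {F : (Om -> Prop) -> Prop} {P} (HP : is_prob Om F P) A :
  F A -> P (fun w => ~ A w) = 1 - P A.
Proof.
  intros HA. rewrite <- (P_total HP). rewrite (P_split HP (fun _ => True) A); auto. 2: apply (F_full HP).
  replace (fun w => True /\ A w) with A by (apply ev_ext; tauto).
  replace (fun w => True /\ ~ A w) with (fun w => ~ A w) by (apply ev_ext; tauto). ring.
Qed.

Lemma P_mono {Om} {F : (Om -> Prop) -> Prop} {P} (HP : is_prob Om F P) A B :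
  F A -> F B -> (forall w, A w -> B w) -> P A <= P B.
Proof.
  intros HA HB H. rewrite (P_split HP B A); auto.
  replace (fun w => B w /\ A w) with A by (apply ev_ext; intuition).
  pose proof (P_nonneg HP (fun w => B w /\ ~ A w)). assert (0 <= P (fun w => B w /\ ~ A w)).
  apply H0. apply (F_and HP); auto. apply (F_not HP); auto. lra.
Qed.

Lemma P_le1 {Om} {F : (Om -> Prop) -> Prop} {P} (HP : is_prob Om F P) A : F A -> P A <= 1.
Proof. intros HA. rewrite <- (P_total HP). apply (P_mono HP); auto. apply (F_full HP). Qed.

Lemma ex_min (A : nat -> Prop) n : A n -> exists m, A m /\ forall k, (k < m)%nat -> ~ A k.
Proof.
  revert n. intro n. induction n as [n IH] using (well_founded_induction Wf_nat.lt_wf). intros Hn.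
  destruct (classic (exists k, (k < n)%nat /\ A k)) as [[k [Hk1 Hk2]]|Hno].
  - exact (IH k Hk1 Hk2).
  - exists n. split; auto. intros k Hk HA. apply Hno. eauto.
Qed.

Lemma P_null_union {Om} {F : (Om -> Prop) -> Prop} {P} (HP : is_prob Om F P) (A : nat -> Om -> Prop) :
  (forall n, F (A n)) -> (forall n, P (A n) = 0) -> P (fun w => exists n, A n w) = 0.
Proof.
  intros HF H0.
  set (D := fun n w => A n w /\ forall m, (m < n)%nat -> ~ A m w).
  assert (HD : forall n, F (D n)).
  { intro n. apply (F_and HP); auto. apply (F_all HP). intro m. apply (F_impl HP). apply (F_not HP); auto. }
  assert (Hd : infinite_sum (fun n => P (D n)) (P (fun w => exists n, D n w))).
  { apply (ps_sigma_add _ _ _ HP); auto. intros m n w Hmn [H1 H2] [H3 H4].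
    destruct (Nat.lt_gt_cases m n) as [[Hl|Hl] _]; auto. apply (H4 m); auto. apply (H2 n); auto. }
  replace (fun w => exists n, D n w) with (fun w => exists n, A n w) in Hd.
  2:{ apply ev_ext. intro w. split. intros [n Hn]. destruct (ex_min (fun n => A n w) n Hn) as [m [Hm1 Hm2]].
      exists m. split; auto. intros [n [Hn _]]; eauto. }
  apply (uniqueness_sum _ _ _ Hd). apply isum_eventually with O. intros n _.
  induction n; simpl.
  - apply Rle_antisym. rewrite <- (H0 O). apply (P_mono HP); auto. intros w [h _]; auto.
    apply (P_nonneg HP); auto.
  - rewrite IHn. assert (P (D (S n)) = 0). apply Rle_antisym. rewrite <- (H0 (S n)). apply (P_mono HP); auto. intros w [h _]; auto.
    apply (P_nonneg HP); auto. lra.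
Qed.

Lemma P_null_sub {Om} {F : (Om -> Prop) -> Prop} {P} (HP : is_prob Om F P) A B :
  F A -> F B -> (forall w, A w -> B w) -> P B = 0 -> P A = 0.
Proof. intros HA HB H H0. apply Rle_antisym. rewrite <- H0. apply (P_mono HP); auto. apply (P_nonneg HP); auto. Qed.

Lemma P_as {Om} {F : (Om -> Prop) -> Prop} {P} (HP : is_prob Om F P) (G A B : Om -> Prop) :
  F G -> P G = 1 -> F A -> F B -> (forall w, G w -> (A w <-> B w)) -> P A = P B.
Proof.
  intros HG HG1 HA HB H.
  assert (Hn : P (fun w => ~ G w) = 0). { rewrite (P_compl HP); auto. lra. }
  rewrite (P_split HP A G), (P_split HP B G); auto.
  replace (fun w => B w /\ G w) with (fun w => A w /\ G w) by (apply ev_ext; intro w; split; intros [h1 h2]; split; auto; apply H; auto).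
  rewrite (P_null_sub HP (fun w => A w /\ ~ G w) (fun w => ~ G w)); auto.
  rewrite (P_null_sub HP (fun w => B w /\ ~ G w) (fun w => ~ G w)); auto.
  all: try (apply (F_and HP); auto; apply (F_not HP); auto). all: try (apply (F_not HP); auto). all: tauto.
Qed.

Definition upd (t : nat -> nat) (i c : nat) : nat -> nat := fun k => if Nat.eqb k i then c else t k.

Lemma F_exfun {Om} {F : (Om -> Prop) -> Prop} {P} (HP : is_prob Om F P) n :
  forall (R : (nat -> nat) -> Om -> Prop),
  (forall t, F (R t)) ->
  (forall t t' w, (forall k, (k <= n)%nat -> t k = t' k) -> R t w -> R t' w) ->
  F (fun w => exists t, R t w).
Proof.
  induction n; intros R HR Hdep.
  - apply (F_ext (fun w => exists c, R (fun _ => c) w)).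
    + intro w. split. intros [c Hc]; eauto. intros [t Ht]. exists (t O). eapply Hdep; [|exact Ht].
      intros k Hk. replace k with O by lia. auto.
    + apply (F_ex HP). auto.
  - apply (F_ext (fun w => exists c, (fun w => exists t, R (upd t (S n) c) w) w)).
    + intro w. split.
      * intros [c [t Ht]]; eauto.
      * intros [t Ht]. exists (t (S n)), t. eapply Hdep; [|exact Ht]. intros k _. unfold upd.
        destruct (Nat.eqb_spec k (S n)); subst; auto.
    + apply (F_ex HP). intro c. apply IHn; auto.
      intros t t' w Htt. apply Hdep. intros k Hk. unfold upd. destruct (Nat.eqb_spec k (S n)); auto.
      apply Htt; lia.
Qed.

Lemma list_as_map (l : list nat) : l = map (fun k => nth k l O) (seq 0 (length l)).
Proof.
  induction l as [|x l IH]; simpl; auto. f_equal. rewrite <- seq_shift, map_map. simpl. exact IH.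
Qed.

Lemma F_exlist {Om} {F : (Om -> Prop) -> Prop} {P} (HP : is_prob Om F P) (R : list nat -> Om -> Prop) :
  (forall l, F (R l)) -> F (fun w => exists l, R l w).
Proof.
  intros HR. apply (F_ext (fun w => exists n, (fun w => exists t, R (map t (seq 0 n)) w) w)).
  - intro w. split. intros [n [t H]]; eauto. intros [l Hl]. exists (length l), (fun k => nth k l O).
    rewrite <- list_as_map; auto.
  - apply (F_ex HP). intro n. apply (F_exfun HP n); auto.
    intros t t' w Htt. replace (map t' (seq 0 n)) with (map t (seq 0 n)); auto.
    apply map_ext_in. intros a Ha. apply in_seq in Ha. apply Htt. lia.
Qed.

Definition Good {Om} (Q : nat -> Om -> nat) (w : Om) : Prop :=
  forall k, (1 <= Q k w)%nat /\ (Q k w <= Q (S k) w)%nat.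

Lemma F_Qeq {Om} {F : (Om -> Prop) -> Prop} {P} {Q p0 p} (HQ : is_markov F P Q p0 p) k j :
  F (fun w => Q k w = j).
Proof. apply (proj1 HQ). Qed.

Lemma F_path {Om} {F : (Om -> Prop) -> Prop} {P} {Q p0 p} (HP : is_prob Om F P) (HQ : is_markov F P Q p0 p) m n y :
  F (fun w => forall k, (m <= k)%nat -> (k <= n)%nat -> Q k w = y k).
Proof. apply (F_all HP). intro k. apply (F_impl HP). apply (F_impl HP). apply (F_Qeq HQ). Qed.

Lemma F_visit {Om} {F : (Om -> Prop) -> Prop} {P} {Q p0 p} (HP : is_prob Om F P) (HQ : is_markov F P Q p0 p) j :
  F (G_ge1 Q j).
Proof. apply (F_ex HP). intro k. apply (F_Qeq HQ). Qed.

Lemma F_Geq {Om} {F : (Om -> Prop) -> Prop} {P} {Q p0 p} (HP : is_prob Om F P) (HQ : is_markov F P Q p0 p) j n :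
  F (G_eq Q j n).
Proof.
  apply (F_exlist HP). intro l. apply (F_and HP). apply (F_const HP). apply (F_and HP). apply (F_const HP).
  apply (F_all HP). intro k. destruct (classic (In k l)) as [H|H].
  - apply (F_ext (fun w => Q k w = j)). intro w; tauto. apply (F_Qeq HQ).
  - apply (F_ext (fun w => ~ Q k w = j)). intro w; tauto. apply (F_not HP). apply (F_Qeq HQ).
Qed.

Lemma F_Gfin {Om} {F : (Om -> Prop) -> Prop} {P} {Q p0 p} (HP : is_prob Om F P) (HQ : is_markov F P Q p0 p) j :
  F (G_finite Q j).
Proof. apply (F_ex HP). intro n. apply (F_Geq HP HQ). Qed.

Lemma F_Good {Om} {F : (Om -> Prop) -> Prop} {P} {Q p0 p} (HP : is_prob Om F P) (HQ : is_markov F P Q p0 p) :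
  F (Good Q).
Proof.
  apply (F_all HP). intro k. apply (F_and HP).
  - apply (F_ext (fun w => ~ Q k w = 0%nat)). intro w; lia. apply (F_not HP). apply (F_Qeq HQ).
  - apply (F_ext (fun w => ~ exists a, (fun a w => exists b, (fun b w => (b < a)%nat /\ Q k w = a /\ Q (S k) w = b) b w) a w)).
    + intro w. split. intros H. apply Nat.nlt_ge. intro Hl. apply H. eauto.
      intros H [a [b [H1 [H2 H3]]]]. lia.
    + apply (F_not HP). apply (F_ex HP). intro a. apply (F_ex HP). intro b.
      apply (F_and HP). apply (F_const HP). apply (F_and HP); apply (F_Qeq HQ).
Qed.

Lemma F_jump {Om} {F : (Om -> Prop) -> Prop} {P} {Q p0 p} (HP : is_prob Om F P) (HQ : is_markov F P Q p0 p) n x :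
  F (jump_prefix Q n x).
Proof.
  apply (F_exfun HP n).
  - intro t. apply (F_and HP). apply (F_const HP). apply (F_and HP).
    + apply (F_all HP). intro k. apply (F_impl HP). apply (F_and HP). apply (F_const HP).
      apply (F_and HP). apply (F_const HP). apply (F_all HP). intro s. apply (F_impl HP). apply (F_Qeq HQ).
    + apply (F_Qeq HQ).
  - intros t t' w Htt [H1 [H2 H3]]. split; [|split].
    + rewrite <- Htt by lia; auto.
    + intros k Hk. rewrite <- !Htt by lia. auto.
    + rewrite <- Htt by lia. auto.
Qed.

Lemma prod_upto_ext f g n : (forall k, (k < n)%nat -> f k = g k) -> prod_upto f n = prod_upto g n.
Proof. induction n; intros H; simpl; auto. rewrite IHn by (intros; apply H; lia). rewrite H by lia. auto. Qed.

Lemma prod_upto_shift f n : prod_upto f (S n) = f O * prod_upto (fun k => f (S k)) n.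
Proof. induction n; simpl in *. ring. rewrite IHn. ring. Qed.

Lemma prod_upto_add f m n : prod_upto f (m + n) = prod_upto f m * prod_upto (fun k => f (m + k)%nat) n.
Proof. induction n; simpl. rewrite Nat.add_0_r. ring. rewrite Nat.add_succ_r. simpl. rewrite IHn. ring. Qed.

Lemma prod_upto_const r n : prod_upto (fun _ => r) n = r ^ n.
Proof. induction n; simpl; auto. rewrite IHn. ring. Qed.

Lemma prod_upto_zero f n k : (k < n)%nat -> f k = 0 -> prod_upto f n = 0.
Proof.
  induction n; intros Hk Hf. lia. simpl. destruct (Nat.eq_dec k n). subst. rewrite Hf. ring.
  rewrite IHn; [ring|lia|auto].
Qed.

Definition prodl (f : nat -> R) (l : list nat) : R := fold_right (fun j acc => f j * acc) 1 l.

Lemma prodl_app f l1 l2 : prodl f (l1 ++ l2) = prodl f l1 * prodl f l2.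
Proof. induction l1; simpl. ring. unfold prodl in *. simpl. rewrite IHl1. ring. Qed.

Lemma prodl_seq f s n : prodl f (seq s n) = prod_upto (fun k => f (s + k)%nat) n.
Proof.
  induction n. simpl; auto. rewrite seq_S, prodl_app, IHn. simpl. unfold prodl; simpl. ring.
Qed.

Lemma prodl_ext f g l : (forall k, In k l -> f k = g k) -> prodl f l = prodl g l.
Proof. induction l; intros H; simpl; auto. unfold prodl in *; simpl. rewrite H by (left; auto). rewrite IHl; auto. intros; apply H; right; auto. Qed.

Definition Ev {Om} (Q : nat -> Om -> nat) m n (y : nat -> nat) : Om -> Prop :=
  fun w => forall k, (m <= k)%nat -> (k <= m + n)%nat -> Q k w = y k.

Lemma marg {Om} {F : (Om -> Prop) -> Prop} {P} {Q p0 p} (HP : is_prob Om F P) (HQ : is_markov F P Q p0 p) m :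
  forall n y, P (Ev Q m n y) = P (fun w => Q m w = y m) * prod_upto (fun k => p (y (m + k)%nat) (y (S (m + k)))) n.
Proof.
  induction m; intros n y.
  - replace (Ev Q 0 n y) with (fun w => forall k, (k <= n)%nat -> Q k w = y k).
    2:{ apply ev_ext. intro w. unfold Ev. split; intros H k; intros; apply H; lia. }
    rewrite (proj2 HQ). replace (fun w => Q 0%nat w = y 0%nat) with (fun w => forall k, (k <= 0)%nat -> Q k w = y k).
    2:{ apply ev_ext. intro w. split; intros H. apply H; lia. intros k Hk. replace k with O by lia; auto. }
    rewrite (proj2 HQ). unfold path_prob. simpl. ring.
  - assert (Key : forall n y, infinite_sum (fun c => P (fun w => Q m w = c) * p c (y (S m)) *
        prod_upto (fun k => p (y (S m + k)%nat) (y (S (S m + k)))) n) (P (Ev Q (S m) n y))).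
    { intros n0 y0.
      set (A := fun c w => Q m w = c /\ Ev Q (S m) n0 y0 w).
      assert (HA : forall c, P (A c) = P (fun w => Q m w = c) * p c (y0 (S m)) *
        prod_upto (fun k => p (y0 (S m + k)%nat) (y0 (S (S m + k)))) n0).
      { intro c. replace (A c) with (Ev Q m (S n0) (upd y0 m c)).
        2:{ apply ev_ext. intro w. unfold A, Ev, upd. split.
            - intros H. split. specialize (H m). rewrite Nat.eqb_refl in H. apply H; lia.
              intros k Hk1 Hk2. specialize (H k). destruct (Nat.eqb_spec k m). lia. apply H; lia.
            - intros [H1 H2] k Hk1 Hk2. destruct (Nat.eqb_spec k m). subst; auto. apply H2; lia. }
        rewrite IHm. unfold upd. rewrite Nat.eqb_refl. rewrite prod_upto_shift. rewrite Nat.add_0_r.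
        rewrite Nat.eqb_refl. replace (Nat.eqb (S m) m) with false by (symmetry; apply Nat.eqb_neq; lia).
        rewrite Rmult_assoc. f_equal. f_equal. apply prod_upto_ext. intros k Hk.
        replace (Nat.eqb (m + S k) m) with false by (symmetry; apply Nat.eqb_neq; lia).
        replace (Nat.eqb (S (m + S k)) m) with false by (symmetry; apply Nat.eqb_neq; lia).
        replace (m + S k)%nat with (S m + k)%nat by lia. auto. }
      apply isum_ext with (fun c => P (A c)); auto.
      replace (Ev Q (S m) n0 y0) with (fun w => exists c, A c w).
      2:{ apply ev_ext. intro w. unfold A. split. intros [c [_ H]]; auto. intros H. exists (Q m w); auto. }
      apply (ps_sigma_add _ _ _ HP).
      - intro c. apply (F_and HP). apply (F_Qeq HQ). unfold Ev. apply (F_path HP HQ).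
      - intros c1 c2 w Hc [H1 _] [H2 _]. congruence. }
    pose proof (Key 0%nat y) as K0. simpl prod_upto in K0.
    replace (Ev Q (S m) 0 y) with (fun w => Q (S m) w = y (S m)) in K0.
    2:{ apply ev_ext. intro w. unfold Ev. split. intros H k H1 H2. replace k with (S m) by lia; auto. intros H; apply H; lia. }
    apply (uniqueness_sum _ _ _ (Key n y)).
    apply isum_ext with (fun c => P (fun w => Q m w = c) * p c (y (S m)) * 1 * prod_upto (fun k => p (y (S m + k)%nat) (y (S (S m + k)))) n).
    intro c; ring. apply isum_scal. auto.
Qed.

Lemma P_pair {Om} {F : (Om -> Prop) -> Prop} {P} {Q p0 p} (HP : is_prob Om F P) (HQ : is_markov F P Q p0 p) k a b :
  P (fun w => Q k w = a /\ Q (S k) w = b) = P (fun w => Q k w = a) * p a b.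
Proof.
  set (y := fun i => if Nat.eqb i k then a else b).
  replace (fun w => Q k w = a /\ Q (S k) w = b) with (Ev Q k 1 y).
  2:{ apply ev_ext. intro w. unfold Ev, y. split.
      - intros H. split. specialize (H k). rewrite Nat.eqb_refl in H. apply H; lia.
        specialize (H (S k)). replace (Nat.eqb (S k) k) with false in H by (symmetry; apply Nat.eqb_neq; lia). apply H; lia.
      - intros [H1 H2] i Hi1 Hi2. destruct (Nat.eqb_spec i k). subst; auto. replace i with (S k) by lia. auto. }
  rewrite (marg HP HQ). simpl. unfold y. rewrite Nat.add_0_r, Nat.eqb_refl.
  replace (Nat.eqb (S k) k) with false by (symmetry; apply Nat.eqb_neq; lia). ring.
Qed.

Lemma P_Q0 {Om} {F : (Om -> Prop) -> Prop} {P} {Q p0 p} (HP : is_prob Om F P) (HQ : is_markov F P Q p0 p)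
  (Hp0 : is_distribution p0) (Hp : is_transition p) k : P (fun w => Q k w = 0%nat) = 0.
Proof.
  induction k.
  - replace (fun w => Q 0%nat w = 0%nat) with (fun w => forall i, (i <= 0)%nat -> Q i w = (fun _ => 0%nat) i).
    2:{ apply ev_ext. intro w. split; intros H. apply H; lia. intros i Hi. replace i with O by lia; auto. }
    rewrite (proj2 HQ). unfold path_prob. simpl. rewrite (proj1 Hp0). ring.
  - replace (fun w => Q (S k) w = 0%nat) with (fun w => exists c, (fun c w => Q k w = c /\ Q (S k) w = 0%nat) c w).
    2:{ apply ev_ext. intro w. split. intros [c [_ H]]; auto. intros H; exists (Q k w); auto. }
    apply (P_null_union HP).
    + intro c. apply (F_and HP); apply (F_Qeq HQ).
    + intro c. rewrite (P_pair HP HQ). destruct c. rewrite IHk. ring.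
      rewrite (proj1 (Hp (S c) ltac:(lia))). ring.
Qed.

Lemma P_Good {Om} {F : (Om -> Prop) -> Prop} {P} {Q p0 p} (HP : is_prob Om F P) (HQ : is_markov F P Q p0 p)
  (Hp0 : is_distribution p0) (Hp : is_transition p) (Hinc : weakly_increasing_kernel p) : P (Good Q) = 1.
Proof.
  assert (H : P (fun w => ~ Good Q w) = 0).
  { replace (fun w => ~ Good Q w) with (fun w => exists k, (fun k w => Q k w = 0%nat \/
        exists a, (fun a w => exists b, (fun b w => (b < a)%nat /\ Q k w = a /\ Q (S k) w = b) b w) a w) k w).
    2:{ apply ev_ext. intro w. unfold Good. split.
        - intros [k [H|[a [b [H1 [H2 H3]]]]]] H0; specialize (H0 k); lia.
        - intros H. apply not_all_ex_not in H. destruct H as [k Hk]. exists k.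
          destruct (Nat.eq_dec (Q k w) 0). left; auto. right. exists (Q k w), (Q (S k) w). lia. }
    apply (P_null_union HP).
    - intro k. apply (F_or HP). apply (F_Qeq HQ). apply (F_ex HP); intro a. apply (F_ex HP); intro b.
      apply (F_and HP). apply (F_const HP). apply (F_and HP); apply (F_Qeq HQ).
    - intro k. replace (fun w => Q k w = 0%nat \/ exists a, exists b, (b < a)%nat /\ Q k w = a /\ Q (S k) w = b)
        with (fun w => exists n, (match n with O => fun w => Q k w = 0%nat | S a => fun w => exists b, (b < a)%nat /\ Q k w = a /\ Q (S k) w = b end) w).
      2:{ apply ev_ext. intro w. split. intros [[|a] H]; eauto. intros [H|[a H]]. exists O; auto. exists (S a); auto. }
      apply (P_null_union HP).
      + intros [|a]. apply (F_Qeq HQ). apply (F_ex HP); intro b. apply (F_and HP). apply (F_const HP). apply (F_and HP); apply (F_Qeq HQ).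
      + intros [|a]. apply (P_Q0 HP HQ Hp0 Hp). apply (P_null_union HP).
        * intro b. apply (F_and HP). apply (F_const HP). apply (F_and HP); apply (F_Qeq HQ).
        * intro b. destruct (Nat.lt_ge_cases b a).
          -- apply (P_null_sub HP _ (fun w => Q k w = a /\ Q (S k) w = b)).
             apply (F_and HP). apply (F_const HP). apply (F_and HP); apply (F_Qeq HQ).
             apply (F_and HP); apply (F_Qeq HQ). tauto.
             rewrite (P_pair HP HQ). rewrite Hinc by auto. ring.
          -- replace (fun w => (b < a)%nat /\ Q k w = a /\ Q (S k) w = b) with (fun _ : Om => False).
             apply (P_empty HP). apply ev_ext. intro; lia. }
  rewrite (P_compl HP) in H. lra. apply (F_Good HP HQ).
Qed.

Lemma good_mono {Om} (Q : nat -> Om -> nat) w k k' : Good Q w -> (k <= k')%nat -> (Q k w <= Q k' w)%nat.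
Proof.
  intros HG H. induction H. lia. pose proof (proj2 (HG m)). lia.
Qed.

Lemma good_pos {Om} (Q : nat -> Om -> nat) w k : Good Q w -> (1 <= Q k w)%nat.
Proof. intros HG. apply (HG k). Qed.

Lemma Geq0_iff {Om} (Q : nat -> Om -> nat) j w : G_eq Q j 0 w <-> ~ G_ge1 Q j w.
Proof.
  split.
  - intros [l [_ [Hl H]]] [k Hk]. destruct l; simpl in Hl; try lia. apply (H k); auto.
  - intros H. exists nil. split. constructor. split. auto. intros k. simpl. split; [|tauto]. intros Hk. apply H. exists k; auto.
Qed.

Lemma Q0_char {Om} (Q : nat -> Om -> nat) w j : Good Q w ->
  (Q 0%nat w = j <-> (forall m, (1 <= m < j)%nat -> ~ G_ge1 Q m w) /\ G_ge1 Q j w).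
Proof.
  intros HG. split.
  - intros H0. split.
    + intros m Hm [k Hk]. pose proof (good_mono Q w 0 k HG ltac:(lia)). lia.
    + exists O; auto.
  - intros [H1 [k Hk]]. pose proof (good_mono Q w 0 k HG ltac:(lia)). pose proof (good_pos Q w 0 HG).
    destruct (Nat.eq_dec (Q 0%nat w) j); auto. exfalso. apply (H1 (Q 0%nat w)). lia. exists O; auto.
Qed.

Lemma jump0_iff {Om} (Q : nat -> Om -> nat) x w : jump_prefix Q 0 x w <-> Q 0%nat w = x 0%nat.
Proof.
  split. intros [t [H1 [_ H3]]]. rewrite H1 in H3. auto.
  intros H. exists (fun _ => O). split; auto. split; auto. intros; lia.
Qed.

Lemma jumpS_iff {Om} (Q : nat -> Om -> nat) n x w : Good Q w ->
  (jump_prefix Q (S n) x w <-> jump_prefix Q n x w /\ (x n < x (S n))%nat /\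
     (forall m, (x n < m < x (S n))%nat -> ~ G_ge1 Q m w) /\ G_ge1 Q (x (S n)) w).
Proof.
  intros HG. split.
  - intros [t [Ht0 [Ht Htn]]].
    destruct (Ht n ltac:(lia)) as [Hlt [Hne Hconst]].
    assert (Hn : Q (t n) w = x n) by (apply Hconst; lia).
    assert (Hxl : (x n < x (S n))%nat).
    { pose proof (good_mono Q w (t n) (t (S n)) HG ltac:(lia)). lia. }
    split; [|split; [auto|split]].
    + exists t. refine (conj Ht0 (conj _ Hn)). intros k Hk. apply Ht. lia.
    + intros m Hm [s Hs]. destruct (Nat.lt_ge_cases s (t (S n))).
      * pose proof (good_mono Q w s (t (S n) - 1) HG ltac:(lia)).
        rewrite (Hconst (t (S n) - 1)%nat) in H0 by lia. lia.
      * pose proof (good_mono Q w (t (S n)) s HG ltac:(lia)). lia.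
    + exists (t (S n)); auto.
  - intros [[t [Ht0 [Ht Htn]]] [Hxl [Hgap [s0 Hs0]]]].
    destruct (ex_min (fun s => Q s w = x (S n)) s0 Hs0) as [s1 [Hs1 Hmin]].
    assert (Hts : (t n < s1)%nat).
    { destruct (Nat.lt_ge_cases (t n) s1); auto. pose proof (good_mono Q w s1 (t n) HG H). lia. }
    exists (fun k => if Nat.eqb k (S n) then s1 else t k). split; [|split].
    + simpl. auto.
    + intros k Hk. replace (Nat.eqb k (S n)) with false by (symmetry; apply Nat.eqb_neq; lia).
      destruct (Nat.eq_dec k n).
      * subst k. rewrite Nat.eqb_refl. split; auto. split. lia.
        intros s Hs. pose proof (good_mono Q w (t n) s HG ltac:(lia)).
        pose proof (good_mono Q w s s1 HG ltac:(lia)).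
        assert (Q s w <> x (S n)) by (apply Hmin; lia).
        destruct (Nat.eq_dec (Q s w) (x n)); auto. exfalso. apply (Hgap (Q s w)). lia. exists s; auto.
      * replace (Nat.eqb (S k) (S n)) with false by (symmetry; apply Nat.eqb_neq; lia). apply Ht. lia.
    + rewrite Nat.eqb_refl. auto.
Qed.

Fixpoint SI (n : nat) (x : nat -> nat) : Prop :=
  match n with O => (1 <= x 0%nat)%nat | S m => SI m x /\ (x m < x (S m))%nat end.

Fixpoint J {Om} (Q : nat -> Om -> nat) (n : nat) (x : nat -> nat) (w : Om) : Prop :=
  match n with
  | O => (forall m, (1 <= m < x 0%nat)%nat -> ~ G_ge1 Q m w) /\ G_ge1 Q (x 0%nat) w
  | S k => J Q k x w /\ (forall m, (x k < m < x (S k))%nat -> ~ G_ge1 Q m w) /\ G_ge1 Q (x (S k)) w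
  end.

Lemma jump_char {Om} (Q : nat -> Om -> nat) n x w : Good Q w -> (jump_prefix Q n x w <-> SI n x /\ J Q n x w).
Proof.
  intros HG. induction n.
  - rewrite jump0_iff. simpl. split.
    + intros H. split. rewrite <- H. apply (good_pos Q w 0 HG). apply (Q0_char Q w (x 0%nat) HG); auto.
    + intros [_ H]. apply (Q0_char Q w (x 0%nat) HG); auto.
  - rewrite (jumpS_iff Q n x w HG), IHn. simpl. tauto.
Qed.

Definition EL {Om} (Q : nat -> Om -> nat) (Z O : list nat) (w : Om) : Prop :=
  (forall z, In z Z -> G_eq Q z 0 w) /\ (forall o, In o O -> G_ge1 Q o w).

Lemma F_EL {Om} {F : (Om -> Prop) -> Prop} {P} {Q p0 p} (HP : is_prob Om F P) (HQ : is_markov F P Q p0 p) Z O :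
  F (EL Q Z O).
Proof.
  apply (F_and HP); apply (F_all HP); intro; apply (F_impl HP). apply (F_Geq HP HQ). apply (F_visit HP HQ).
Qed.

Lemma P_Geq0 {Om} {F : (Om -> Prop) -> Prop} {P} {Q p0 p} (HP : is_prob Om F P) (HQ : is_markov F P Q p0 p) j :
  P (G_eq Q j 0) = 1 - P (G_ge1 Q j).
Proof.
  rewrite <- (P_compl HP) by (apply (F_visit HP HQ)). f_equal. apply ev_ext. intro w. apply Geq0_iff.
Qed.

Lemma P_EL_formula {Om} {F : (Om -> Prop) -> Prop} {P} {Q p0 p} (HP : is_prob Om F P) (HQ : is_markov F P Q p0 p)
  (Hind : G_independent P Q) O :
  forall Z, NoDup (Z ++ O) -> (forall m, In m (Z ++ O) -> (1 <= m)%nat) ->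
  P (EL Q Z O) = prodl (fun m => P (G_eq Q m 0)) Z * prodl (fun m => P (G_ge1 Q m)) O.
Proof.
  induction O as [|o O IH]; intros Z Hnd Hpos.
  - rewrite app_nil_r in Hnd, Hpos. unfold prodl at 2. simpl. rewrite Rmult_1_r.
    replace (EL Q Z nil) with (fun w => forall j, In j Z -> G_eq Q j ((fun _ => 0%nat) j) w).
    2:{ apply ev_ext. intro w. unfold EL. simpl. tauto. }
    rewrite Hind; auto.
  - assert (H1 : NoDup (Z ++ O)) by (eapply NoDup_remove_1; eauto).
    assert (H2 : NoDup ((o :: Z) ++ O)).
    { simpl. apply (Permutation_NoDup (l := Z ++ o :: O)); auto. apply Permutation_sym, Permutation_middle. }
    assert (Hp1 : forall m, In m (Z ++ O) -> (1 <= m)%nat).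
    { intros m Hm. apply Hpos. apply in_app_or in Hm. apply in_or_app. simpl. tauto. }
    assert (Hp2 : forall m, In m ((o :: Z) ++ O) -> (1 <= m)%nat).
    { intros m Hm. apply Hpos. simpl in Hm. apply in_or_app. destruct Hm as [Hm|Hm]. right; left; auto.
      apply in_app_or in Hm. simpl. tauto. }
    pose proof (IH Z H1 Hp1) as E1. pose proof (IH (o :: Z) H2 Hp2) as E2.
    rewrite (P_split HP (EL Q Z O) (G_ge1 Q o)) in E1 by (apply (F_EL HP HQ) || apply (F_visit HP HQ)).
    replace (fun w => EL Q Z O w /\ G_ge1 Q o w) with (EL Q Z (o :: O)) in E1.
    2:{ apply ev_ext. intro w. unfold EL. simpl. split.
        - intros [A B]. split; [split; [auto| intros o' H; apply B; right; auto] | apply B; left; auto].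
        - intros [[A B] C]. split; auto. intros o' [<-|H]; auto. }
    replace (fun w => EL Q Z O w /\ ~ G_ge1 Q o w) with (EL Q (o :: Z) O) in E1.
    2:{ apply ev_ext. intro w. unfold EL. simpl. rewrite <- Geq0_iff. split.
        - intros [A B]. split. split; auto; intros z Hz; apply A; right; auto. apply A; left; auto.
        - intros [[A B] C]. split; auto. intros z [<-|H]; auto. }
    rewrite E2 in E1. unfold prodl in *. simpl in *. rewrite (P_Geq0 HP HQ) in E1. lra.
Qed.

Fixpoint Zl (n : nat) (x : nat -> nat) : list nat :=
  match n with O => seq 1 (x 0%nat - 1) | S k => seq (S (x k)) (x (S k) - S (x k)) ++ Zl k x end.
Fixpoint Ol (n : nat) (x : nat -> nat) : list nat :=
  match n with O => x 0%nat :: nil | S k => x (S k) :: Ol k x end.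

Lemma J_EL {Om} (Q : nat -> Om -> nat) n x w : J Q n x w <-> EL Q (Zl n x) (Ol n x) w.
Proof.
  induction n; simpl; unfold EL in *.
  - split.
    + intros [A B]. split. intros z Hz. apply in_seq in Hz. apply Geq0_iff. apply A. lia.
      intros o [<-|[]]; auto.
    + intros [A B]. split. intros m Hm. apply Geq0_iff. apply A. apply in_seq. lia. apply B; left; auto.
  - rewrite IHn. split.
    + intros [[A B] [C D]]. split.
      * intros z Hz. apply in_app_or in Hz. destruct Hz as [Hz|Hz]; auto. apply in_seq in Hz. apply Geq0_iff. apply C. lia.
      * intros o [<-|Ho]; auto.
    + intros [A B]. split; [split|split].
      * intros z Hz. apply A. apply in_or_app; auto.
      * intros o Ho. apply B; right; auto.
      * intros m Hm. apply Geq0_iff. apply A. apply in_or_app. left. apply in_seq. lia.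
      * apply B. left; auto.
Qed.

Lemma In_Ol n x : In (x n) (Ol n x).
Proof. destruct n; simpl; auto. Qed.

Lemma Zl_props n x : SI n x -> NoDup (Zl n x ++ Ol n x) /\ forall m, In m (Zl n x ++ Ol n x) -> (1 <= m <= x n)%nat.
Proof.
  induction n; simpl; intros Hs.
  - split.
    + apply NoDup_app. apply seq_NoDup. constructor. simpl; auto. constructor.
      intros a Ha. apply in_seq in Ha. simpl. lia.
    + intros m Hm. apply in_app_or in Hm. destruct Hm as [Hm|[<-|[]]]. apply in_seq in Hm; lia. lia.
  - destruct Hs as [Hs Hl]. destruct (IHn Hs) as [Hnd Hr].
    assert (Hxn : (1 <= x n)%nat). { assert (In (x n) (Zl n x ++ Ol n x)) by (apply in_or_app; right; apply In_Ol). apply Hr in H. lia. }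
    split.
    + apply (Permutation_NoDup (l := seq (S (x n)) (x (S n) - S (x n)) ++ (x (S n) :: (Zl n x ++ Ol n x)))).
      * rewrite <- app_assoc. apply Permutation_app_head. apply Permutation_middle.
      * apply NoDup_app. apply seq_NoDup. constructor; auto. intro H. apply Hr in H. lia.
        intros a Ha. apply in_seq in Ha. intros [H|H]. lia. apply Hr in H. lia.
    + intros m Hm. repeat (apply in_app_or in Hm; destruct Hm as [Hm|Hm]).
      apply in_seq in Hm. lia. pose proof (Hr m (in_or_app _ _ _ (or_introl Hm))). lia.
      destruct Hm as [<-|Hm]. lia. pose proof (Hr m (in_or_app _ _ _ (or_intror Hm))). lia.
Qed.

Lemma P_jump_SI {Om} {F : (Om -> Prop) -> Prop} {P} {Q p0 p} (HP : is_prob Om F P) (HQ : is_markov F P Q p0 p)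
  (Hp0 : is_distribution p0) (Hp : is_transition p) (Hinc : weakly_increasing_kernel p) (Hind : G_independent P Q) n x :
  SI n x -> P (jump_prefix Q n x) = prodl (fun m => P (G_eq Q m 0)) (Zl n x) * prodl (fun m => P (G_ge1 Q m)) (Ol n x).
Proof.
  intros Hs. destruct (Zl_props n x Hs) as [Hnd Hr].
  rewrite <- (P_EL_formula HP HQ Hind); auto. 2:{ intros m Hm. apply Hr in Hm. lia. }
  apply (P_as HP (Good Q)). apply (F_Good HP HQ). apply (P_Good HP HQ Hp0 Hp Hinc).
  apply (F_jump HP HQ). apply (F_EL HP HQ).
  intros w HG. rewrite (jump_char Q n x w HG), <- J_EL. tauto.
Qed.

Lemma P_jump_nSI {Om} {F : (Om -> Prop) -> Prop} {P} {Q p0 p} (HP : is_prob Om F P) (HQ : is_markov F P Q p0 p)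
  (Hp0 : is_distribution p0) (Hp : is_transition p) (Hinc : weakly_increasing_kernel p) n x :
  ~ SI n x -> P (jump_prefix Q n x) = 0.
Proof.
  intros Hs. rewrite <- (P_empty HP).
  apply (P_as HP (Good Q)). apply (F_Good HP HQ). apply (P_Good HP HQ Hp0 Hp Hinc).
  apply (F_jump HP HQ). apply (F_empty HP).
  intros w HG. rewrite (jump_char Q n x w HG). tauto.
Qed.

Lemma L7 {Om} (Q : nat -> Om -> nat) w j n : Good Q w ->
  (Q 0%nat w = j /\ G_eq Q j (S n) w <-> (forall k, (k <= n)%nat -> Q k w = j) /\ Q (S n) w <> j).
Proof.
  intros HG. split.
  - intros [H0 [l [Hnd [Hl Hiff]]]].
    assert (Hall : forall k, (k <= n)%nat -> Q k w = j).
    { intros k Hk. destruct (Nat.eq_dec (Q k w) j) as [e|ne]; auto. exfalso.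
      assert (incl l (seq 0 k)).
      { intros s Hs. apply Hiff in Hs. apply in_seq. destruct (Nat.lt_ge_cases s k). lia. exfalso. apply ne.
        pose proof (good_mono Q w 0 k HG ltac:(lia)). pose proof (good_mono Q w k s HG H). lia. }
      apply NoDup_incl_length in H; auto. rewrite length_seq in H. lia. }
    split; auto. intros Hn. assert (incl (seq 0 (S (S n))) l).
    { intros s Hs. apply in_seq in Hs. apply Hiff. destruct (Nat.eq_dec s (S n)). subst; auto. apply Hall. lia. }
    apply NoDup_incl_length in H; [|apply seq_NoDup]. rewrite length_seq in H. lia.
  - intros [Hall Hn]. split. apply Hall; lia. exists (seq 0 (S n)). split. apply seq_NoDup. split. apply length_seq.
    intros k. rewrite in_seq. split.
    + intros Hk. destruct (Nat.lt_ge_cases k (S n)). lia. exfalso.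
      pose proof (good_mono Q w n (S n) HG ltac:(lia)). pose proof (good_mono Q w (S n) k HG H).
      rewrite Hall in H0 by lia. apply Hn. lia.
    + intros Hk. apply Hall. lia.
Qed.

Lemma fin_stay {Om} (Q : nat -> Om -> nat) w i : G_finite Q i w -> (forall k, Q k w = i) -> False.
Proof.
  intros [n [l [_ [_ H]]]] Hs. assert (In (S (list_max l)) l) by (apply H; auto).
  assert (list_max l <= list_max l)%nat by lia. apply list_max_le in H1. rewrite Forall_forall in H1.
  apply H1 in H0. lia.
Qed.

Lemma Geq_visit {Om} (Q : nat -> Om -> nat) w j n : G_eq Q j (S n) w -> G_ge1 Q j w.
Proof. intros [l [_ [Hl H]]]. destruct l as [|k l]. simpl in Hl; lia. exists k. apply H. left; auto. Qed.

Lemma not_SI n x : ~ SI n x -> x 0%nat = 0%nat \/ exists k, (k < n)%nat /\ ~ (x k < x (S k))%nat.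
Proof.
  induction n; simpl; intros H.
  - left. lia.
  - destruct (classic (SI n x)) as [Hs|Hs].
    + right. exists n. split. lia. intro Hl. apply H; auto.
    + destruct (IHn Hs) as [H1|[k [Hk1 Hk2]]]; auto. right. exists k. split; auto.
Qed.

Theorem mainTheorem11
  (Om : Type) (F : (Om -> Prop) -> Prop) (P : (Om -> Prop) -> R)
  (Q : nat -> Om -> nat) (p0 : nat -> R) (p : nat -> nat -> R)
  (HP : is_prob Om F P)
  (Hp0 : is_distribution p0)
  (Hp : is_transition p)
  (Hinc : weakly_increasing_kernel p)
  (HQ : is_markov F P Q p0 p)
  (Hinf : forall N : nat, exists j, (N <= j)%nat /\ 0 < p0 j)
  (Hfin : forall j, (1 <= j)%nat -> P (G_finite Q j) = 1)
  (Hvis : forall j, (1 <= j)%nat -> P (G_eq Q j 0) < 1)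
  (Hind : G_independent P Q) :
  let h := fun j => P (G_ge1 Q j) in
  (* formula for h_j *)
  (forall j, (1 <= j)%nat -> forall T, tail_sum p0 j T -> h j = p0 j / T) /\
  (* prod_{j>=1} (1 - h_j) = 0 *)
  Un_cv (fun n => prod_upto (fun k => 1 - h (S k)) n) 0 /\
  (* form of the transition matrix *)
  (forall i, (1 <= i)%nat ->
     p i i < 1 /\
     forall j, (i < j)%nat ->
       p i j = (1 - p i i) * h j * prod_upto (fun n => 1 - h (S i + n)%nat) (j - S i) /\
       (forall T, tail_sum p0 (S i) T -> p i j = (1 - p i i) * (p0 j / T))) /\
  (* (a) <-> (b) <-> (c) *)
  (((forall i, (1 <= i)%nat -> p i i = h i) <->
    (forall j, (1 <= j)%nat -> exists theta, 0 <= theta < 1 /\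
        forall n, P (G_eq Q j n) = (1 - theta) * theta ^ n)) /\
   ((forall j, (1 <= j)%nat -> exists theta, 0 <= theta < 1 /\
        forall n, P (G_eq Q j n) = (1 - theta) * theta ^ n) <->
    is_weak_record_kernel p0 p)) /\
  (* (a') <-> (b') <-> (c') *)
  (((forall i, (1 <= i)%nat -> p i i = 0) <->
    (forall j, (1 <= j)%nat -> exists theta, 0 <= theta <= 1 /\
        P (G_eq Q j 0) = 1 - theta /\ P (G_eq Q j 1) = theta)) /\
   ((forall j, (1 <= j)%nat -> exists theta, 0 <= theta <= 1 /\
        P (G_eq Q j 0) = 1 - theta /\ P (G_eq Q j 1) = theta) <->
    is_strict_record_kernel p0 p)) /\
  (* the chain observed at its changes of state is the strict record chain *)
  (forall (n : nat) (x : nat -> nat) (T : nat -> R),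
     (forall k, tail_sum p0 (S (x k)) (T k)) ->
     P (jump_prefix Q n x) =
       p0 (x O) * prod_upto (fun k => if Nat.ltb (x k) (x (S k)) then p0 (x (S k)) / T k else 0) n).
Proof.
  intro h.
  set (a := fun m => P (G_eq Q m 0)).
  assert (ha : forall m, a m = 1 - h m) by (intro m; apply (P_Geq0 HP HQ)).
  assert (a_rng : forall m, 0 <= a m <= 1).
  { intro m. split. apply (P_nonneg HP). apply (F_Geq HP HQ). apply (P_le1 HP). apply (F_Geq HP HQ). }
  assert (h_pos : forall j, (1 <= j)%nat -> 0 < h j). { intros j Hj. specialize (Hvis j Hj). fold (a j) in Hvis. rewrite ha in Hvis. lra. }
  set (cc := fun n => prod_upto (fun k => a (S k)) n).
  assert (p0_eq : forall j, (1 <= j)%nat -> p0 j = cc (j - 1)%nat * h j).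
  { intros j Hj. pose proof (P_jump_SI HP HQ Hp0 Hp Hinc Hind 0 (fun _ => j) Hj) as H.
    simpl in H. rewrite prodl_seq in H. unfold prodl in H. simpl in H.
    replace (jump_prefix Q 0 (fun _ => j)) with (fun w => forall k, (k <= 0)%nat -> Q k w = (fun _ => j) k) in H.
    2:{ apply ev_ext. intro w. rewrite jump0_iff. split. intros H0; apply H0; lia. intros H0 k Hk. replace k with O by lia; auto. }
    rewrite (proj2 HQ) in H. unfold path_prob in H. simpl in H. unfold cc. fold h in H. fold a in H. change (p0 j = prod_upto (fun k => P (G_eq Q (S k) 0)) (j-1) * P (G_ge1 Q j)). lra. }
  assert (cc_rec : forall n, cc (S n) = cc n - p0 (S n)).
  { intro n. rewrite p0_eq by lia. replace (S n - 1)%nat with n by lia. unfold cc at 1. simpl. fold (cc n). rewrite ha. ring. }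
  assert (sum_p0 : forall N, sum_f_R0 p0 N = 1 - cc N).
  { induction N. simpl. rewrite (proj1 Hp0). unfold cc. simpl. ring. simpl. rewrite IHN, cc_rec. ring. }
  assert (cc_lim : Un_cv cc 0).
  { intros eps He. destruct (proj2 (proj2 Hp0) eps He) as [N HN]. exists N. intros n Hn. specialize (HN n Hn).
    rewrite sum_p0 in HN. unfold Rdist in *. replace (cc n - 0) with (- (1 - cc n - 1)) by ring. rewrite Rabs_Ropp. auto. }
  assert (cc_nn : forall n, 0 <= cc n).
  { induction n. unfold cc; simpl; lra. unfold cc; simpl. fold (cc n). pose proof (a_rng (S n)). nra. }
  assert (cc_dec : forall n m, (n <= m)%nat -> cc m <= cc n).
  { intros n m Hnm. induction Hnm. lra. unfold cc at 1; simpl. fold (cc m). pose proof (a_rng (S m)). pose proof (cc_nn m). nra. }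
  assert (cc_pos : forall n, 0 < cc n).
  { intro n. destruct (Rle_lt_dec (cc n) 0) as [Hc|Hc]; auto. exfalso.
    destruct (Hinf (S n)) as [j [Hj Hpj]]. rewrite p0_eq in Hpj by lia.
    assert (cc (j - 1)%nat = 0). { pose proof (cc_dec n (j-1)%nat ltac:(lia)). pose proof (cc_nn (j-1)%nat). lra. }
    rewrite H in Hpj. lra. }
  assert (tail_ex : forall j, (1 <= j)%nat -> tail_sum p0 j (cc (j - 1)%nat)).
  { intros j Hj. unfold tail_sum.
    assert (Hps : forall N, sum_f_R0 (fun n => p0 (j + n)%nat) N = cc (j - 1)%nat - cc (j + N)%nat).
    { induction N. simpl. rewrite Nat.add_0_r. assert (E := cc_rec (j-1)%nat). replace (S (j-1)) with j in E by lia. lra. simpl. rewrite IHN. rewrite (Nat.add_succ_r j N), cc_rec. ring. }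
    intros eps He. destruct (cc_lim eps He) as [N HN]. exists N. intros n Hn. rewrite Hps. unfold Rdist in *.
    specialize (HN (j + n)%nat ltac:(lia)). replace (cc (j - 1)%nat - cc (j + n)%nat - cc (j - 1)%nat) with (- (cc (j + n)%nat - 0)) by ring.
    rewrite Rabs_Ropp. auto. }
  assert (tail_eq : forall j T, (1 <= j)%nat -> tail_sum p0 j T -> T = cc (j - 1)%nat).
  { intros j T Hj HT. apply (uniqueness_sum _ _ _ HT). apply tail_ex; auto. }
  assert (h_lt1 : forall j, (1 <= j)%nat -> h j < 1).
  { intros j Hj. pose proof (cc_pos j). unfold cc in H. replace j with (S (j - 1)) in H by lia. simpl in H.
    fold (cc (j-1)%nat) in H. rewrite ha in H. replace (S (j-1)) with j in H by lia. pose proof (cc_pos (j-1)%nat).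
    destruct (Rlt_le_dec (h j) 1); auto. nra. }
  assert (h_eq : forall j, (1 <= j)%nat -> h j = p0 j / cc (j - 1)%nat).
  { intros j Hj. rewrite p0_eq by auto. field. pose proof (cc_pos (j-1)%nat). lra. }
  assert (PA : forall j m, P (fun w => forall k, (k <= m)%nat -> Q k w = j) = p0 j * p j j ^ m).
  { intros j m. rewrite (proj2 HQ m (fun _ => j)). unfold path_prob. rewrite prod_upto_const. auto. }
  assert (PQ0 : forall j, P (fun w => Q 0%nat w = j) = p0 j).
  { intro j. rewrite <- (Rmult_1_r (p0 j)). rewrite <- (pow_O (p j j)). rewrite <- PA. f_equal. apply ev_ext. intro w.
    split. intros H k Hk. replace k with O by lia; auto. intros H; apply H; lia. }
  assert (p0_pos : forall j, (1 <= j)%nat -> 0 < p0 j).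
  { intros j Hj. rewrite p0_eq by auto. pose proof (cc_pos (j-1)%nat). pose proof (h_pos j Hj). nra. }
  assert (pii_nn : forall i j, (1 <= i)%nat -> 0 <= p i j). { intros i j Hi. apply (Hp i Hi). }
  assert (pii_le1 : forall i, (1 <= i)%nat -> p i i <= 1).
  { intros i Hi. assert (P (fun w => Q 0%nat w = i /\ Q 1%nat w = i) <= P (fun w => Q 0%nat w = i)).
    { apply (P_mono HP). apply (F_and HP); apply (F_Qeq HQ). apply (F_Qeq HQ). tauto. }
    rewrite (P_pair HP HQ), PQ0 in H. pose proof (p0_pos i Hi). nra. }
  assert (pii_lt1 : forall i, (1 <= i)%nat -> p i i < 1).
  { intros i Hi. destruct (Rle_lt_or_eq_dec _ _ (pii_le1 i Hi)) as [|E]; auto. exfalso.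
    set (A := fun m w => forall k, (k <= m)%nat -> Q k w = i).
    assert (FA : forall m, F (A m)). { intro m. unfold A. apply (F_all HP). intro k. apply (F_impl HP). apply (F_Qeq HQ). }
    set (Stay := fun w => forall k, Q k w = i).
    assert (FS : F Stay). { apply (F_all HP). intro k. apply (F_Qeq HQ). }
    assert (N0 : P (fun w => A 0%nat w /\ ~ Stay w) = 0).
    { apply (P_null_sub HP _ (fun w => exists n, (fun n w => A n w /\ ~ Q (S n) w = i) n w)).
      apply (F_and HP); auto. apply (F_not HP); auto.
      apply (F_ex HP). intro n. apply (F_and HP); auto. apply (F_not HP). apply (F_Qeq HQ).
      - intros w [H0 H1]. apply not_all_ex_not in H1. destruct H1 as [k Hk].
        destruct (ex_min (fun k => Q k w <> i) k Hk) as [k' [Hk1 Hk2]].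
        destruct k'. exfalso. apply Hk1. apply H0. lia.
        exists k'. split; auto. intros s Hs. apply NNPP. intro. apply (Hk2 s); auto. lia.
      - apply (P_null_union HP). intro n. apply (F_and HP); auto. apply (F_not HP). apply (F_Qeq HQ).
        intro n. pose proof (P_split HP (A n) (fun w => Q (S n) w = i) (FA n) (F_Qeq HQ _ _)) as Hs.
        unfold A in Hs.
        assert (E2 : P (fun w => (forall k, (k <= n)%nat -> Q k w = i) /\ Q (S n) w = i) = P (fun w => forall k, (k <= S n)%nat -> Q k w = i)).
        { f_equal. apply ev_ext. intro w. split. intros [H1 H2] k Hk. destruct (Nat.eq_dec k (S n)). subst; auto. apply H1; lia.
          intros H; split. intros k Hk; apply H; lia. apply H; lia. }
        rewrite E2 in Hs. rewrite !PA in Hs. unfold A. rewrite E in Hs. rewrite !pow1 in Hs. lra. }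
    pose proof (P_split HP (A 0%nat) Stay (FA 0%nat) FS) as Hs.
    replace (fun w => A 0%nat w /\ Stay w) with Stay in Hs.
    2:{ apply ev_ext. intro w. unfold A, Stay. split. intros H; split; auto. tauto. }
    rewrite N0 in Hs. unfold A in Hs. rewrite PA in Hs. simpl in Hs.
    assert (P (fun w => G_finite Q i w \/ Stay w) = P (G_finite Q i) + P Stay).
    { apply (P_add2 HP). apply (F_Gfin HP HQ). auto. intros w H1 H2. apply (fin_stay Q w i); auto. }
    pose proof (P_le1 HP (fun w => G_finite Q i w \/ Stay w) ltac:(apply (F_or HP); auto; apply (F_Gfin HP HQ))).
    rewrite Hfin in H by auto. pose proof (p0_pos i Hi). lra. }
  assert (pij_eq : forall i j, (1 <= i)%nat -> (i < j)%nat ->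
     p i j = (1 - p i i) * h j * prod_upto (fun k => a (S i + k)%nat) (j - S i)).
  { intros i j Hi Hij.
    set (x := fun k => if Nat.eqb k 0 then i else j).
    assert (Hs : SI 1 x) by (simpl; unfold x; simpl; lia).
    pose proof (P_jump_SI HP HQ Hp0 Hp Hinc Hind 1 x Hs) as H1.
    set (y := fun m k => if Nat.leb k m then i else j).
    assert (Hev : jump_prefix Q 1 x = fun w => exists m, (fun m w => forall k, (k <= S m)%nat -> Q k w = y m k) m w).
    { apply ev_ext. intro w. unfold y. split.
      - intros [t [Ht0 [Ht Ht1]]]. destruct (Ht 0%nat ltac:(lia)) as [Hlt [_ Hc]]. rewrite Ht0 in Hlt, Hc.
        exists (t 1%nat - 1)%nat. intros k Hk. destruct (Nat.leb_spec k (t 1%nat - 1)).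
        + apply Hc. lia.
        + replace k with (t 1%nat) by lia. auto.
      - intros [m Hm]. exists (fun k => if Nat.eqb k 0 then 0%nat else S m). split; auto. split.
        + intros k Hk. replace k with 0%nat by lia. simpl. unfold x; simpl. split. lia. split. lia.
          intros s Hs'. specialize (Hm s ltac:(lia)). destruct (Nat.leb_spec s m); auto; lia.
        + simpl. unfold x; simpl. specialize (Hm (S m) ltac:(lia)). destruct (Nat.leb_spec (S m) m); auto; lia. }
    assert (Hsum : infinite_sum (fun m => P (fun w => forall k, (k <= S m)%nat -> Q k w = y m k)) (P (jump_prefix Q 1 x))).
    { rewrite Hev. apply (ps_sigma_add _ _ _ HP).
      - intro m. apply (F_all HP). intro k. apply (F_impl HP). apply (F_Qeq HQ).
      - intros m1 m2 w Hne H1' H2'. unfold y in *. destruct (Nat.lt_gt_cases m1 m2) as [[Hl|Hl] _]; auto.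
        + specialize (H1' (S m1) ltac:(lia)). specialize (H2' (S m1) ltac:(lia)).
          destruct (Nat.leb_spec (S m1) m1); try lia. destruct (Nat.leb_spec (S m1) m2); try lia.
        + specialize (H1' (S m2) ltac:(lia)). specialize (H2' (S m2) ltac:(lia)).
          destruct (Nat.leb_spec (S m2) m1); try lia. destruct (Nat.leb_spec (S m2) m2); try lia. }
    assert (Hterm : forall m, P (fun w => forall k, (k <= S m)%nat -> Q k w = y m k) = p0 i * p i j * p i i ^ m).
    { intro m. rewrite (proj2 HQ). unfold path_prob. simpl prod_upto. unfold y at 1.
      simpl Nat.leb. rewrite (prod_upto_ext _ (fun _ => p i i)). rewrite prod_upto_const.
      unfold y. rewrite Nat.leb_refl. destruct (Nat.leb_spec (S m) m). lia. ring.
      intros k Hk. unfold y. destruct (Nat.leb_spec k m); try lia. destruct (Nat.leb_spec (S k) m); try lia. auto. }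
    assert (Hgeo : infinite_sum (fun m => P (fun w => forall k, (k <= S m)%nat -> Q k w = y m k)) (p0 i * p i j / (1 - p i i))).
    { apply isum_ext with (fun m => 1 * p i i ^ m * (p0 i * p i j)).
      intro m. rewrite Hterm. ring.
      replace (p0 i * p i j / (1 - p i i)) with (/ (1 - p i i) * (p0 i * p i j)) by (field; pose proof (pii_lt1 i Hi); lra).
      apply isum_scal. apply GP_infinite. pose proof (pii_lt1 i Hi). pose proof (pii_nn i i Hi). rewrite Rabs_right; lra. }
    pose proof (uniqueness_sum _ _ _ Hsum Hgeo) as Hu. rewrite H1 in Hu.
    simpl in Hu. unfold x in Hu. simpl in Hu.
    rewrite prodl_app, !prodl_seq in Hu. unfold prodl in Hu. simpl in Hu.
    change (prod_upto (fun k => P (G_eq Q (1 + k) 0)) (i - 1)) with (cc (i - 1)%nat) in Hu.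
    pose proof (p0_eq i Hi). pose proof (p0_pos i Hi). pose proof (pii_lt1 i Hi).
    fold h in Hu. fold a in Hu.
    change (prod_upto (fun k => a (S (i + k))) (j - S i)) with (prod_upto (fun k => a (S i + k)%nat) (j - S i)) in Hu.
    set (G := prod_upto (fun k => a (S i + k)%nat) (j - S i)) in *.
    apply (Rmult_eq_reg_l (p0 i)). 2: lra.
    replace (p0 i * p i j) with ((p0 i * p i j / (1 - p i i)) * (1 - p i i)) by (field; lra).
    rewrite <- Hu. rewrite H. unfold G, cc, h, a. simpl. ring. }
  assert (G_dist : forall j n, (1 <= j)%nat -> P (G_eq Q j (S n)) = h j * (1 - p j j) * p j j ^ n).
  { intros j n Hj.
    set (v := fun k => if Nat.eqb k j then S n else 0%nat).
    assert (Hnd : NoDup (j :: seq 1 (j - 1))).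
    { constructor. rewrite in_seq. lia. apply seq_NoDup. }
    pose proof (Hind (j :: seq 1 (j - 1)) v Hnd) as HI.
    assert (Hpos : forall k, In k (j :: seq 1 (j - 1)) -> (1 <= k)%nat).
    { intros k [<-|Hk]; auto. apply in_seq in Hk; lia. }
    specialize (HI Hpos).
    change (fold_right (fun k acc => P (G_eq Q k (v k)) * acc) 1 (j :: seq 1 (j - 1)))
      with (P (G_eq Q j (v j)) * prodl (fun k => P (G_eq Q k (v k))) (seq 1 (j - 1))) in HI.
    rewrite (prodl_ext _ a) in HI.
    2:{ intros k Hk. apply in_seq in Hk. unfold v. destruct (Nat.eqb_spec k j). lia. auto. }
    replace (v j) with (S n) in HI by (unfold v; rewrite Nat.eqb_refl; auto). rewrite prodl_seq in HI.
    change (prod_upto (fun k => a (1 + k)%nat) (j - 1)) with (cc (j - 1)%nat) in HI.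
    assert (Has : P (fun w => forall k, In k (j :: seq 1 (j - 1)) -> G_eq Q k (v k) w) =
                  P (fun w => (forall k, (k <= n)%nat -> Q k w = j) /\ Q (S n) w <> j)).
    { apply (P_as HP (Good Q)). apply (F_Good HP HQ). apply (P_Good HP HQ Hp0 Hp Hinc).
      apply (F_all HP). intro k. apply (F_impl HP). apply (F_Geq HP HQ).
      apply (F_and HP). apply (F_all HP). intro k. apply (F_impl HP). apply (F_Qeq HQ). apply (F_not HP). apply (F_Qeq HQ).
      intros w HG. rewrite <- (L7 Q w j n HG). rewrite (Q0_char Q w j HG). split.
      - intros H. assert (HGj : G_eq Q j (S n) w). { specialize (H j (or_introl eq_refl)). unfold v in H. rewrite Nat.eqb_refl in H. auto. }
        split; [split|auto]. intros m Hm. apply Geq0_iff. assert (Hin : In m (seq 1 (j - 1))) by (apply in_seq; lia). specialize (H m (or_intror Hin)).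
        unfold v in H. destruct (Nat.eqb_spec m j). lia. auto. eapply Geq_visit; eauto.
      - intros [[H1 H2] H3] k [<-|Hk]. unfold v. rewrite Nat.eqb_refl. auto.
        apply in_seq in Hk. unfold v. destruct (Nat.eqb_spec k j). lia. apply Geq0_iff. apply H1. lia. }
    rewrite HI in Has.
    pose proof (P_split HP (fun w => forall k, (k <= n)%nat -> Q k w = j) (fun w => Q (S n) w = j)
      ltac:(apply (F_all HP); intro k; apply (F_impl HP); apply (F_Qeq HQ)) (F_Qeq HQ _ _)) as Hsp.
    assert (E2 : P (fun w => (forall k, (k <= n)%nat -> Q k w = j) /\ Q (S n) w = j) = P (fun w => forall k, (k <= S n)%nat -> Q k w = j)).
    { f_equal. apply ev_ext. intro w. split. intros [H1 H2] k Hk. destruct (Nat.eq_dec k (S n)). subst; auto. apply H1; lia.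
      intros H; split. intros k Hk; apply H; lia. apply H; lia. }
    cbv beta in Hsp. rewrite E2, !PA in Hsp.
    rewrite p0_eq in Hsp by auto. pose proof (cc_pos (j - 1)%nat).
    apply (Rmult_eq_reg_r (cc (j - 1)%nat)). 2: lra. rewrite Has. simpl in Hsp. lra. }
  assert (cc_split : forall i j, (i < j)%nat -> cc (j - 1)%nat = cc i * prod_upto (fun k => a (S i + k)%nat) (j - S i)).
  { intros i j Hij. replace (j - 1)%nat with (i + (j - S i))%nat by lia. unfold cc. rewrite prod_upto_add. reflexivity. }
  assert (cc_S : forall i, (1 <= i)%nat -> cc i = cc (i - 1)%nat * (1 - h i)).
  { intros i Hi. rewrite <- ha. replace i with (S (i - 1)) at 1 by lia. unfold cc. simpl. replace (S (i - 1)) with i by lia. auto. }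
  assert (pij2 : forall i j, (1 <= i)%nat -> (i < j)%nat -> p i j = (1 - p i i) * (p0 j / cc i)).
  { intros i j Hi Hij. rewrite pij_eq by auto. rewrite (p0_eq j) by lia. rewrite cc_split with (i := i) by auto.
    field. pose proof (cc_pos i). lra. }
  assert (Ga0 : forall j, P (G_eq Q j 0) = 1 - h j) by (intro; apply ha).
  assert (h_nn : forall j, (1 <= j)%nat -> 0 <= h j <= 1) by (intros j Hj; pose proof (h_pos j Hj); pose proof (h_lt1 j Hj); lra).
  assert (AtoB : (forall i, (1 <= i)%nat -> p i i = h i) -> (forall j, (1 <= j)%nat -> exists theta, 0 <= theta < 1 /\
        forall n, P (G_eq Q j n) = (1 - theta) * theta ^ n)).
  { intros HA j Hj. exists (h j). split. pose proof (h_pos j Hj); pose proof (h_lt1 j Hj); lra.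
    intros [|n]. rewrite Ga0. simpl. ring. rewrite G_dist, HA by auto. simpl. ring. }
  assert (BtoA : (forall j, (1 <= j)%nat -> exists theta, 0 <= theta < 1 /\
        forall n, P (G_eq Q j n) = (1 - theta) * theta ^ n) -> (forall i, (1 <= i)%nat -> p i i = h i)).
  { intros HB i Hi. destruct (HB i Hi) as [th [Hth Hn]]. pose proof (Hn 0%nat) as H0. pose proof (Hn 1%nat) as H1.
    rewrite Ga0 in H0. rewrite G_dist in H1 by auto. simpl in H0, H1. assert (th = h i) by lra. subst th.
    pose proof (h_pos i Hi). apply (Rmult_eq_reg_l (h i)). nra. lra. }
  assert (AtoC : (forall i, (1 <= i)%nat -> p i i = h i) -> is_weak_record_kernel p0 p).
  { intros HA i j Hi Hj T HT. rewrite (tail_eq i T Hi HT). destruct (Nat.leb_spec i j).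
    - destruct (Nat.eq_dec i j). subst. rewrite HA by auto. apply h_eq; auto.
      rewrite pij2 by lia. rewrite HA by auto. rewrite cc_S by auto. field. pose proof (cc_pos (i-1)%nat). pose proof (h_lt1 i Hi). lra.
    - apply Hinc; auto. }
  assert (CtoA : is_weak_record_kernel p0 p -> (forall i, (1 <= i)%nat -> p i i = h i)).
  { intros HC i Hi. rewrite (HC i i Hi Hi _ (tail_ex i Hi)). rewrite Nat.leb_refl. symmetry. apply h_eq; auto. }
  assert (A'toB' : (forall i, (1 <= i)%nat -> p i i = 0) -> (forall j, (1 <= j)%nat -> exists theta, 0 <= theta <= 1 /\
        P (G_eq Q j 0) = 1 - theta /\ P (G_eq Q j 1) = theta)).
  { intros HA j Hj. exists (h j). split. auto. split. apply Ga0. rewrite G_dist, HA by auto. simpl. ring. }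
  assert (B'toA' : (forall j, (1 <= j)%nat -> exists theta, 0 <= theta <= 1 /\
        P (G_eq Q j 0) = 1 - theta /\ P (G_eq Q j 1) = theta) -> (forall i, (1 <= i)%nat -> p i i = 0)).
  { intros HB i Hi. destruct (HB i Hi) as [th [Hth [H0 H1]]]. rewrite Ga0 in H0. rewrite G_dist in H1 by auto.
    simpl in H1. assert (th = h i) by lra. subst th. pose proof (h_pos i Hi).
    apply (Rmult_eq_reg_l (h i)). nra. lra. }
  assert (A'toC' : (forall i, (1 <= i)%nat -> p i i = 0) -> is_strict_record_kernel p0 p).
  { intros HA i j Hi Hj T HT. rewrite (tail_eq (S i) T ltac:(lia) HT). replace (S i - 1)%nat with i by lia.
    destruct (Nat.ltb_spec i j).
    - rewrite pij2 by auto. rewrite HA by auto. ring.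
    - destruct (Nat.eq_dec i j). subst. apply HA; auto. apply Hinc; lia. }
  assert (C'toA' : is_strict_record_kernel p0 p -> (forall i, (1 <= i)%nat -> p i i = 0)).
  { intros HC i Hi. rewrite (HC i i Hi Hi _ (tail_ex (S i) ltac:(lia))). rewrite Nat.ltb_irrefl. auto. }
  assert (Jform : forall n x, SI n x -> prodl a (Zl n x) * prodl h (Ol n x) =
            p0 (x 0%nat) * prod_upto (fun k => p0 (x (S k)) / cc (x k)) n).
  { induction n; intros x Hs.
    - simpl in *. rewrite prodl_seq. unfold prodl. simpl. rewrite (p0_eq (x 0%nat)) by auto. unfold cc. simpl. ring.
    - simpl in Hs. destruct Hs as [Hs Hl]. simpl Zl. simpl Ol. rewrite prodl_app. unfold prodl at 3. simpl fold_right.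
      fold (prodl h (Ol n x)). simpl prod_upto.
      transitivity ((p0 (x 0%nat) * prod_upto (fun k => p0 (x (S k)) / cc (x k)) n) * (p0 (x (S n)) / cc (x n))); [|ring].
      rewrite <- IHn by auto.
      rewrite prodl_seq. rewrite (p0_eq (x (S n))) by lia. rewrite (cc_split (x n)) by auto.
      field. apply Rgt_not_eq, cc_pos. }
  split; [|split; [|split; [|split; [split|split; [split|]]]]].
  - intros j Hj T HT. rewrite (tail_eq j T Hj HT). apply h_eq; auto.
  - replace (fun n => prod_upto (fun k => 1 - h (S k)) n) with cc. auto.
    apply functional_extensionality. intro n. unfold cc. apply prod_upto_ext. intros k _. apply ha.
  - intros i Hi. split. auto. intros j Hij. split.
    + rewrite pij_eq by auto. f_equal. apply prod_upto_ext. intros k _. apply ha.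
    + intros T HT. rewrite (tail_eq (S i) T ltac:(lia) HT). replace (S i - 1)%nat with i by lia. auto.
  - split; auto.
  - split; auto.
  - split; auto.
  - split; auto.
  - intros n x T HT.
    rewrite (prod_upto_ext _ (fun k => if Nat.ltb (x k) (x (S k)) then p0 (x (S k)) / cc (x k) else 0)).
    2:{ intros k _. rewrite (tail_eq (S (x k)) (T k) ltac:(lia) (HT k)). replace (S (x k) - 1)%nat with (x k) by lia. auto. }
    destruct (classic (SI n x)) as [Hs|Hs].
    + rewrite (P_jump_SI HP HQ Hp0 Hp Hinc Hind n x Hs). fold a. fold h. rewrite Jform by auto. f_equal.
      apply prod_upto_ext. intros k Hk. destruct (Nat.ltb_spec (x k) (x (S k))); auto. exfalso.
      clear -Hs Hk H. induction n. lia. simpl in Hs. destruct Hs as [Hs Hl]. destruct (Nat.eq_dec k n). subst. lia. apply IHn; auto. lia.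
    + rewrite (P_jump_nSI HP HQ Hp0 Hp Hinc n x Hs). destruct (not_SI n x Hs) as [H0|[k [Hk1 Hk2]]].
      * rewrite H0, (proj1 Hp0). ring.
      * rewrite (prod_upto_zero _ n k Hk1). ring. destruct (Nat.ltb_spec (x k) (x (S k))); auto. lia.
Qed.

Print Assumptions mainTheorem11.
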